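(* On the open set $U=\{(\vec x,\vec p)\in\mathbb{R}^6:\vec x\wedge\vec p\neq0\}$ with bracket $\{x^a,p^b\}=\delta^{ab}$, consider the constraints $\phi_1=\vec x\cdot\vec p$ and $\phi_2=|\vec x|^2-|\vec p|^2$. They are second class, with $\{\phi_1,\phi_2\}=-2(|\vec x|^2+|\vec p|^2)$, and define the Dirac bracket $$\{F,G\}_D=\{F,G\}-\sum_{i,j}\{F,\phi_i\}(C^{-1})^{ij}\{\phi_j,G\},\qquad C_{ij}=\{\phi_i,\phi_j\}.$$ On the surface $\Sigma=\{\phi_1=\phi_2=0\}\cap U$ set $\mathcal N=|\vec J|$ with $\vec J=\vec x\wedge\vec p$, $\vec K=|\vec x|\,\vec x$, $\vec L=|\vec p|\,\vec p$. Then on $\Sigma$: $|\vec J|^2=|\vec K|^2=|\vec L|^2=\mathcal N^2$, $\vec J\cdot\vec K=\vec J\cdot\vec L=\vec K\cdot\vec L=0$, and the Dirac brackets are $$\{J_a,J_b\}_D=\epsilon_{abc}J_c,\quad \{J_a,K_b\}_D=\epsilon_{abc}K_c,\quad \{J_a,L_b\}_D=\epsilon_{abc}L_c,$$ $$\{K_a,K_b\}_D=-\epsilon_{abc}J_c,\quad \{L_a,L_b\}_D=-\epsilon_{abc}J_c,\quad \{K_a,L_b\}_D=\delta_{ab}\mathcal N,$$ $$\{\mathcal N,J_a\}_D=0,\quad \{\mathcal N,K_a\}_D=-L_a,\quad \{\mathcal N,L_a\}_D=K_a,$$ i.e. $(\mathcal N,\vec J,\vec K,\vec L)$ span an $\mathfrak{so}(3,2)$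 algebra.
   Context: $\epsilon_{abc}$ is the totally antisymmetric symbol with $\epsilon_{123}=1$; repeated indices are summed. Dirac brackets of functions are evaluated on the constraint surface $\Sigma$. *)

(* Defs.v *)
From Stdlib Require Import Reals Lra ClassicalEpsilon.
Open Scope R_scope.

Inductive idx := I1 | I2 | I3.

Definition idx_eq_dec (a b : idx) : {a = b} + {a <> b}.
Proof. decide equality. Defined.

Definition sum3 (f : idx -> R) : R := f I1 + f I2 + f I3.

Definition delta (a b : idx) : R := if idx_eq_dec a b then 1 else 0.

Definition eps (a b c : idx) : R :=
  match a, b, c with
  | I1, I2, I3 => 1 | I2, I3, I1 => 1 | I3, I1, I2 => 1
  | I1, I3, I2 => -1 | I3, I2, I1 => -1 | I2, I1, I3 => -1
  | _, _, _ => 0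
  end.

Definition vec := idx -> R.
Definition dot (u v : vec) : R := sum3 (fun a => u a * v a).
Definition vnorm (u : vec) : R := sqrt (dot u u).
Definition cross (u v : vec) : vec :=
  fun a => sum3 (fun b => sum3 (fun c => eps a b c * u b * v c)).

Definition PF := vec -> vec -> R.

Definition upd (v : vec) (a : idx) (t : R) : vec :=
  fun b => if idx_eq_dec b a then t else v b.

(* the derivative of f at t (the unique l with derivable_pt_lim f t l, when it exists) *)
Definition Dv (f : R -> R) (t : R) : R :=
  epsilon (inhabits 0) (fun l => derivable_pt_lim f t l).

Definition dx (a : idx) (F : PF) (x p : vec) : R := Dv (fun t => F (upd x a t) p) (x a).
Definition dp (a : idx) (F : PF) (x p : vec) : R := Dv (fun t => F x (upd p a t)) (p a).

Definition PB (F G : PF) : PF := fun x p =>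
  sum3 (fun a => dx a F x p * dp a G x p - dp a F x p * dx a G x p).

Definition phi1 : PF := fun x p => dot x p.
Definition phi2 : PF := fun x p => dot x x - dot p p.

Inductive ci := C1 | C2.
Definition phi (i : ci) : PF := match i with C1 => phi1 | C2 => phi2 end.
Definition sum2 (f : ci -> R) : R := f C1 + f C2.

Definition Cmat (x p : vec) (i j : ci) : R := PB (phi i) (phi j) x p.
Definition Cinv (x p : vec) (i j : ci) : R :=
  let c11 := Cmat x p C1 C1 in let c12 := Cmat x p C1 C2 in
  let c21 := Cmat x p C2 C1 in let c22 := Cmat x p C2 C2 in
  let det := c11 * c22 - c12 * c21 in
  match i, j with
  | C1, C1 => c22 / det | C1, C2 => - c12 / det
  | C2, C1 => - c21 / det | C2, C2 => c11 / det
  end.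

Definition DB (F G : PF) : PF := fun x p =>
  PB F G x p - sum2 (fun i => sum2 (fun j =>
     PB F (phi i) x p * Cinv x p i j * PB (phi j) G x p)).

Definition inU (x p : vec) : Prop := ~ (forall a, cross x p a = 0).
Definition inSigma (x p : vec) : Prop := phi1 x p = 0 /\ phi2 x p = 0 /\ inU x p.

Definition Jf (a : idx) : PF := fun x p => cross x p a.
Definition Kf (a : idx) : PF := fun x p => vnorm x * x a.
Definition Lf (a : idx) : PF := fun x p => vnorm p * p a.
Definition Nf : PF := fun x p => vnorm (cross x p).

(* Main.v *)
Require Import Defs.
From Stdlib Require Import Nsatz.
From Stdlib Require Import Reals Lra ClassicalEpsilon.
From Coquelicot Require Import Coquelicot.
Open Scope R_scope.

Lemma Dv_eq f t l : is_derive f t l -> Dv f t = l.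
Proof.
  intro H. apply is_derive_Reals in H.
  unfold Dv. apply (uniqueness_limite f t).
  - apply (epsilon_spec (inhabits 0) (fun l => derivable_pt_lim f t l)). now exists l.
  - exact H.
Qed.

Ltac simp := cbn [upd idx_eq_dec idx_rec idx_rect sumbool_rec sumbool_rect eps delta sum3 dot cross vnorm Jf Kf Lf Nf phi1 phi2].

Ltac sidec := try solve [repeat split; auto; lra].

Lemma dx_phi1 a x p : dx a phi1 x p = p a.
Proof. unfold dx. apply Dv_eq. destruct a; unfold phi1, dot, sum3; simp; auto_derive; sidec; ring. Qed.
Lemma dp_phi1 a x p : dp a phi1 x p = x a.
Proof. unfold dp. apply Dv_eq. destruct a; unfold phi1, dot, sum3; simp; auto_derive; sidec; ring. Qed.
Lemma dx_phi2 a x p : dx a phi2 x p = 2 * x a.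
Proof. unfold dx. apply Dv_eq. destruct a; unfold phi2, dot, sum3; simp; auto_derive; sidec; ring. Qed.
Lemma dp_phi2 a x p : dp a phi2 x p = - 2 * p a.
Proof. unfold dp. apply Dv_eq. destruct a; unfold phi2, dot, sum3; simp; auto_derive; sidec; ring. Qed.

Lemma dx_J a d x p : dx d (Jf a) x p = sum3 (fun c => eps a d c * p c).
Proof. unfold dx. apply Dv_eq. destruct a, d; unfold Jf, cross, sum3; simp; auto_derive; sidec; ring. Qed.
Lemma dp_J a d x p : dp d (Jf a) x p = sum3 (fun b => eps a b d * x b).
Proof. unfold dp. apply Dv_eq. destruct a, d; unfold Jf, cross, sum3; simp; auto_derive; sidec; ring. Qed.

Lemma dx_K a d x p : 0 < dot x x -> dx d (Kf a) x p = x d * x a / vnorm x + vnorm x * delta a d.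
Proof. intro H. unfold dx. apply Dv_eq. unfold dot, sum3 in H.
  assert (sqrt (x I1 * x I1 + x I2 * x I2 + x I3 * x I3) <> 0) by (apply Rgt_not_eq, sqrt_lt_R0; lra).
  destruct a, d; unfold Kf, vnorm, dot, sum3; simp; auto_derive; sidec; field; auto.
Qed.
Lemma dp_K a d x p : dp d (Kf a) x p = 0.
Proof. unfold dp. apply Dv_eq. destruct a, d; unfold Kf; simp; auto_derive; sidec; ring. Qed.
Lemma dx_L a d x p : dx d (Lf a) x p = 0.
Proof. unfold dx. apply Dv_eq. destruct a, d; unfold Lf; simp; auto_derive; sidec; ring. Qed.
Lemma dp_L a d x p : 0 < dot p p -> dp d (Lf a) x p = p d * p a / vnorm p + vnorm p * delta a d.
Proof. intro H. unfold dp. apply Dv_eq. unfold dot, sum3 in H.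
  assert (sqrt (p I1 * p I1 + p I2 * p I2 + p I3 * p I3) <> 0) by (apply Rgt_not_eq, sqrt_lt_R0; lra).
  destruct a, d; unfold Lf, vnorm, dot, sum3; simp; auto_derive; sidec; field; auto.
Qed.

Lemma dx_N d x p : 0 < dot (cross x p) (cross x p) ->
  dx d Nf x p = cross p (cross x p) d / vnorm (cross x p).
Proof. intro H. unfold dx. apply Dv_eq. unfold dot, sum3, cross, sum3 in H; simp; simpl in H.
  destruct d; unfold Nf, vnorm, dot, cross, sum3; simp; auto_derive; sidec.
  all: try (split; [lra|auto]).
  all: field; apply Rgt_not_eq, sqrt_lt_R0; lra.
Qed.
Lemma dp_N d x p : 0 < dot (cross x p) (cross x p) ->
  dp d Nf x p = cross (cross x p) x d / vnorm (cross x p).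
Proof. intro H. unfold dp. apply Dv_eq. unfold dot, sum3, cross, sum3 in H; simp; simpl in H.
  destruct d; unfold Nf, vnorm, dot, cross, sum3; simp; auto_derive; sidec.
  all: try (split; [lra|auto]).
  all: field; apply Rgt_not_eq, sqrt_lt_R0; lra.
Qed.

Lemma lagrange x p : dot (cross x p) (cross x p) = dot x x * dot p p - dot x p * dot x p.
Proof. unfold dot, cross, sum3; simp; ring. Qed.

Lemma C11 x p : Defs.Cmat x p Defs.C1 Defs.C1 = 0.
Proof. unfold Defs.Cmat, PB, sum3; cbn [phi]; rewrite !dx_phi1, !dp_phi1; ring. Qed.
Lemma C22 x p : Defs.Cmat x p Defs.C2 Defs.C2 = 0.
Proof. unfold Defs.Cmat, PB, sum3; cbn [phi]; rewrite !dx_phi2, !dp_phi2; ring. Qed.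
Lemma C12 x p : Defs.Cmat x p Defs.C1 Defs.C2 = -2 * (dot x x + dot p p).
Proof. unfold Defs.Cmat, PB, sum3; cbn [phi]; rewrite !dx_phi2, !dp_phi2, !dx_phi1, !dp_phi1; unfold dot, sum3; ring. Qed.
Lemma C21 x p : Defs.Cmat x p Defs.C2 Defs.C1 = 2 * (dot x x + dot p p).
Proof. unfold Defs.Cmat, PB, sum3; cbn [phi]; rewrite !dx_phi2, !dp_phi2, !dx_phi1, !dp_phi1; unfold dot, sum3; ring. Qed.

Section S.
Variables (x p : vec) (s : R).
Hypothesis Hs : 0 < s.
Hypothesis HX : dot x x = s * s.
Hypothesis HP : dot p p = s * s.
Lemma Cinv11 : Defs.Cinv x p Defs.C1 Defs.C1 = 0.
Proof. unfold Defs.Cinv; rewrite C11, C22, C12, C21, HX, HP. assert (0 < s*s) by nra. field; repeat split; nra. Qed.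
Lemma Cinv22 : Defs.Cinv x p Defs.C2 Defs.C2 = 0.
Proof. unfold Defs.Cinv; rewrite C11, C22, C12, C21, HX, HP. assert (0 < s*s) by nra. field; repeat split; nra. Qed.
Lemma Cinv12 : Defs.Cinv x p Defs.C1 Defs.C2 = / s * / s / 4.
Proof. unfold Defs.Cinv; rewrite C11, C22, C12, C21, HX, HP. assert (0 < s*s) by nra. field; repeat split; nra. Qed.
Lemma Cinv21 : Defs.Cinv x p Defs.C2 Defs.C1 = - (/ s * / s / 4).
Proof. unfold Defs.Cinv; rewrite C11, C22, C12, C21, HX, HP. assert (0 < s*s) by nra. field; repeat split; nra. Qed.
End S.

Lemma sigma_facts x p : inSigma x p ->
  exists s, 0 < s /\ vnorm x = s /\ vnorm p = s /\ vnorm (cross x p) = s * s /\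
    dot x x = s * s /\ dot p p = s * s /\ dot x p = 0 /\ 0 < dot (cross x p) (cross x p).
Proof.
  intros [H1 [H2 H3]]. unfold phi1, phi2 in *.
  assert (HJ : 0 < dot (cross x p) (cross x p)).
  { destruct (Rlt_dec 0 (dot (cross x p) (cross x p))) as [h|h]; auto.
    exfalso; apply H3; intro a. unfold dot, sum3 in h.
    destruct a; nra. }
  assert (HX0 : 0 <= dot x x) by (unfold dot, sum3; nra).
  rewrite lagrange, H1 in HJ.
  assert (HX : 0 < dot x x) by nra.
  exists (sqrt (dot x x)).
  assert (E : sqrt (dot x x) * sqrt (dot x x) = dot x x) by (apply sqrt_sqrt; lra).
  repeat split.
  - apply sqrt_lt_R0; auto.
  - unfold vnorm; f_equal; lra.
  - rewrite E. unfold vnorm. rewrite lagrange, H1.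
    replace (dot x x * dot p p - 0 * 0) with (dot x x * dot x x) by (assert (E2 : dot p p = dot x x) by lra; rewrite E2; ring).
    apply sqrt_square; lra.
  - auto.
  - rewrite E; lra.
  - auto.
  - rewrite lagrange, H1; lra.
Qed.
Lemma dx_K' x p : 0 < dot x x -> forall a d, dx d (Kf a) x p = x d * x a / vnorm x + vnorm x * delta a d.
Proof. intros; apply dx_K; auto. Qed.
Lemma dp_L' x p : 0 < dot p p -> forall a d, dp d (Lf a) x p = p d * p a / vnorm p + vnorm p * delta a d.
Proof. intros; apply dp_L; auto. Qed.
Lemma dx_N' x p : 0 < dot (cross x p) (cross x p) -> forall d,
  dx d Nf x p = cross p (cross x p) d / vnorm (cross x p).
Proof. intros; apply dx_N; auto. Qed.
Lemma dp_N' x p : 0 < dot (cross x p) (cross x p) -> forall d,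
  dp d Nf x p = cross (cross x p) x d / vnorm (cross x p).
Proof. intros; apply dp_N; auto. Qed.

Ltac br x p s Hs HX HP HS HJ Hnx Hnp Hnj HXp HPp :=
  unfold DB, sum2; cbn [phi];
  rewrite (Cinv11 x p s Hs HX HP), (Cinv22 x p s Hs HX HP), (Cinv12 x p s Hs HX HP), (Cinv21 x p s Hs HX HP);
  unfold PB, sum3;
  rewrite ?dx_phi1, ?dp_phi1, ?dx_phi2, ?dp_phi2, ?dx_J, ?dp_J, ?dp_K, ?dx_L,
          ?(dx_K' x p HXp), ?(dp_L' x p HPp), ?(dx_N' x p HJ), ?(dp_N' x p HJ);
  unfold Kf, Lf, Nf, Jf; rewrite ?Hnx, ?Hnp, ?Hnj;
  unfold Rdiv; rewrite ?Rinv_mult;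
  let u := fresh "u" in let Hu := fresh "Hu" in
  set (u := / s); assert (Hu : s * u = 1) by (unfold u; field; lra);
  clearbody u; clear Hnx Hnp Hnj HJ HXp HPp; assert (H4 : 4 * / 4 = 1) by field;
  unfold dot, cross, sum3 in *; simp.

Theorem mainTheorem6 :
  (forall x p : vec, inU x p ->
     PB phi1 phi2 x p = -2 * (dot x x + dot p p)) /\
  (forall x p : vec, inSigma x p ->
     let J : vec := fun a => Jf a x p in
     let K : vec := fun a => Kf a x p in
     let L : vec := fun a => Lf a x p in
     let N := Nf x p in
     dot J J = N ^ 2 /\ dot K K = N ^ 2 /\ dot L L = N ^ 2 /\
     dot J K = 0 /\ dot J L = 0 /\ dot K L = 0 /\
     (forall a b : idx,
        DB (Jf a) (Jf b) x p = sum3 (fun c => eps a b c * J c) /\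
        DB (Jf a) (Kf b) x p = sum3 (fun c => eps a b c * K c) /\
        DB (Jf a) (Lf b) x p = sum3 (fun c => eps a b c * L c) /\
        DB (Kf a) (Kf b) x p = - sum3 (fun c => eps a b c * J c) /\
        DB (Lf a) (Lf b) x p = - sum3 (fun c => eps a b c * J c) /\
        DB (Kf a) (Lf b) x p = delta a b * N) /\
     (forall a : idx,
        DB Nf (Jf a) x p = 0 /\
        DB Nf (Kf a) x p = - L a /\
        DB Nf (Lf a) x p = K a)).
Proof.
  split.
  { intros x p _. unfold PB, sum3. rewrite !dx_phi1, !dp_phi1, !dx_phi2, !dp_phi2.
    unfold dot, sum3; ring. }
  intros x p H. cbv zeta.
  destruct (sigma_facts x p H) as (s & Hs & Hnx & Hnp & Hnj & HX & HP & HS & HJ).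
  assert (HXp : 0 < dot x x) by nra. assert (HPp : 0 < dot p p) by nra.
  clear H.
  split; [| split; [| split; [| split; [| split; [| split; [| split]]]]]].
  - change (dot (cross x p) (cross x p) = Nf x p ^ 2). unfold Nf.
    rewrite Hnj, lagrange, HX, HP, HS. ring.
  - unfold Kf, Nf; rewrite Hnx, Hnj.
    transitivity (s*s*dot x x); [unfold dot, sum3; ring | rewrite HX; ring].
  - unfold Lf, Nf; rewrite Hnp, Hnj.
    transitivity (s*s*dot p p); [unfold dot, sum3; ring | rewrite HP; ring].
  all: try (unfold Jf, Kf, Lf, Nf; rewrite ?Hnx, ?Hnp, ?Hnj;
       clear Hnx Hnp Hnj HJ HXp HPp; unfold dot, cross, sum3 in *; simp; solve [nsatz]).
  - intros a b. repeat split;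
    br x p s Hs HX HP HS HJ Hnx Hnp Hnj HXp HPp; destruct a, b; simp; nsatz.
  - intros a. repeat split;
    br x p s Hs HX HP HS HJ Hnx Hnp Hnj HXp HPp; destruct a; simp; nsatz.
Qed.
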